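(* Let $m, n_0, n_1$ be positive integers and $n(\lambda) = n_0 + n_1\lambda$. Suppose nonzero polynomials $x(\lambda), y(\lambda), z(\lambda) \in \mathbb{Q}[\lambda]$ satisfy $$\frac{m}{n(\lambda)} = \frac{1}{x(\lambda)} + \frac{1}{y(\lambda)} + \frac{1}{z(\lambda)}$$ identically, and that two of the three polynomials have degree $1$. Then the third polynomial has degree at most $3$.
   Context: $\lambda$ is an indeterminate; the equation is an identity of rational functions in $\lambda$. *)

(* Defs.v *)
From mathcomp Require Import all_boot all_order all_algebra fraction.
Set Implicit Arguments. Unset Strict Implicit. Unset Printing Implicit Defensive.
Import GRing.Theory.
Local Open Scope ring_scope.

Definition ratfun := {fraction {poly rat}}.
Definition rf (p : {poly rat}) : ratfun := @FracField.tofrac _ p.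

(* Main.v *)
Require Import Defs.
From mathcomp Require Import all_boot all_order all_algebra fraction.
From mathcomp Require Import ring zify.
Import GRing.Theory Num.Theory.
Local Open Scope ring_scope.

Lemma size_n (n0 n1 : nat) : (0 < n1)%N ->
  size (n0%:R%:P + n1%:R *: 'X : {poly rat}) = 2%N.
Proof.
move=> h; have h' : (n1 == 0)%N = false by case: n1 h.
by rewrite addrC -mul_polyC size_MXaddC polyC_eq0 pnatr_eq0 h' /= size_polyC pnatr_eq0 h'.
Qed.

Lemma alg {F : fieldType} {M N A B C : F} : N != 0 -> A != 0 -> B != 0 -> C != 0 ->
  M / N = A^-1 + B^-1 + C^-1 -> N * A * B = C * (M * A * B - N * B - N * A).
Proof.
move=> nN nA nB nC H.
have -> : M * A * B - N * B - N * A = N * A * B * (M / N - A^-1 - B^-1).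
  by field; rewrite nN nA nB.
rewrite H.
have -> : A^-1 + B^-1 + C^-1 - A^-1 - B^-1 = C^-1 by ring.
by field.
Qed.

Lemma key (m : nat) (n a b c : {poly rat}) :
  n != 0 -> a != 0 -> b != 0 -> c != 0 ->
  size n = 2%N -> size a = 2%N -> size b = 2%N ->
  rf (m%:R%:P) / rf n = (rf a)^-1 + (rf b)^-1 + (rf c)^-1 ->
  (size c <= 4)%N.
Proof.
move=> nn na nb nc sn sa sb H.
set P := m%:R%:P * a * b - n * b - n * a.
have nN : rf n != 0 by rewrite /rf tofrac_eq0.
have nA : rf a != 0 by rewrite /rf tofrac_eq0.
have nB : rf b != 0 by rewrite /rf tofrac_eq0.
have nC : rf c != 0 by rewrite /rf tofrac_eq0.
have E : rf (n * a * b) = rf (c * P).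
  rewrite /P /rf !(tofracM, tofracB).
  exact: (alg nN nA nB nC H).
move/eqP: E; rewrite /rf tofrac_eq => /eqP E.
have nab : n * a * b != 0 by rewrite !mulf_neq0.
have nP : P != 0 by apply: contra nab; rewrite E => /eqP ->; rewrite mulr0.
have : size (n * a * b) = size (c * P) by rewrite E.
rewrite !size_mul ?mulf_neq0 // sn sa sb /=.
have : (0 < size P)%N by rewrite size_poly_gt0.
move=> h1 h2; have h3 : (size c + size P).-1 = 4%N by rewrite -h2.
move: h1 h3; case: (size P) => // k _; rewrite addnS /= => <-; exact: leq_addr.
Qed.

Theorem lemma2 (m n0 n1 : nat) (x y z : {poly rat}) :
  (0 < m)%N -> (0 < n0)%N -> (0 < n1)%N ->
  x != 0 -> y != 0 -> z != 0 ->
  rf (m%:R%:P) / rf (n0%:R%:P + n1%:R *: 'X)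
    = (rf x)^-1 + (rf y)^-1 + (rf z)^-1 ->
  (size x = 2%N /\ size y = 2%N -> (size z <= 4)%N) /\
  (size x = 2%N /\ size z = 2%N -> (size y <= 4)%N) /\
  (size y = 2%N /\ size z = 2%N -> (size x <= 4)%N).
Proof.
move=> _ _ h1 nx ny nz H.
have sn := size_n n0 n1 h1.
have nn : n0%:R%:P + n1%:R *: 'X != 0 :> {poly rat}.
  by rewrite -size_poly_eq0 sn.
split; [|split] => -[s1 s2].
- exact: (key m _ _ _ _ nn nx ny nz sn s1 s2 H).
- apply: (key m _ _ _ _ nn nx nz ny sn s1 s2); rewrite H; ring.
- apply: (key m _ _ _ _ nn ny nz nx sn s1 s2); rewrite H; ring.
Qed.
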